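(* Let $G(\mathcal V,\mathcal E)$ be a finite simple directed graph and $f\ge 0$ an integer, and assume Condition 1 holds for $G$. Let $A,B,F$ be a partition of $\mathcal V$ with $A$ non-empty and $|F|\le f$ ($B$ may be empty). If $B\not\rightarrow A$, then $A \Rightarrow_{\mathcal V - F} B$.
   Context: For disjoint sets $X,Y\subseteq\mathcal V$ with $Y$ non-empty, $X\rightarrow Y$ means that $X$ contains at least $f+1$ distinct nodes $i$ such that $(i,j)\in\mathcal E$ for some $j\in Y$; $X\not\rightarrow Y$ means this fails. Condition 1: for every partition $L,C,R,F$ of $\mathcal V$ (with $C$ or $F$ possibly empty) such that $L,R$ are non-empty and $|F|\le f$, either $L\cup C\rightarrow R$ or $R\cup C\rightarrow L$. An $(A,b)$-path is a directed path from some node of $A$ to the node $b\notin A$; it excludes $F$ if it contains no node of $F$; $(A,b)$-paths are disjoint if they pairwise share only $b$. For pairwise disjoint $A,B,F$ with $|F|\le f$, $A \Rightarrow_{\mathcal V - F} B$ means: $B=\emptyset$, or every $b\in B$ has at least $f+1$ pairwise disjoint $(A,b)$-paths excluding $F$. *)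

(* Defs.v *)
From mathcomp Require Import all_boot.
Set Implicit Arguments. Unset Strict Implicit. Unset Printing Implicit Defensive.

(* A finite simple directed graph: vertex set V (a finType), edge relation E,
   with no self loops (simple: at most one edge (i,j) per ordered pair,
   automatic for a relation). *)
Definition simple_digraph (V : finType) (E : rel V) : Prop :=
  forall v : V, ~~ E v v.

Definition reaches (V : finType) (E : rel V) (f : nat) (X Y : {set V}) : Prop :=
  f.+1 <= #|[set i in X | [exists j in Y, E i j]]|.

(* X, Y disjoint, Y nonempty are side conditions of the notation; they are
   supplied as hypotheses wherever the notation is used. *)

Definition partition4 (V : finType) (L C R F : {set V}) : Prop :=
  [&& [disjoint L & C], [disjoint L & R], [disjoint L & F],
      [disjoint C & R], [disjoint C & F], [disjoint R & F]
    & L :|: C :|: R :|: F == [set: V]].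

Definition partition3 (V : finType) (A B F : {set V}) : Prop :=
  [/\ [disjoint A & B], [disjoint A & F], [disjoint B & F]
    & A :|: B :|: F = [set: V]].

Definition condition1 (V : finType) (E : rel V) (f : nat) : Prop :=
  forall L C R F : {set V},
    partition4 L C R F -> L != set0 -> R != set0 -> #|F| <= f ->
    reaches E f (L :|: C) R \/ reaches E f (R :|: C) L.

Definition ABpath (V : finType) (E : rel V) (A : {set V}) (b : V) (p : seq V) : Prop :=
  b \notin A /\
  exists x q, p = x :: q /\ path E x q /\ uniq p /\ x \in A /\ last x q = b.

Definition excludes (V : finType) (F : {set V}) (p : seq V) : Prop :=
  all (fun v => v \notin F) p.

Definition robust_reach (V : finType) (E : rel V) (f : nat) (A B F : {set V}) : Prop :=
  B = set0 \/
  forall b, b \in B ->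
    exists ps : seq (seq V),
      size ps = f.+1 /\
      (forall p, p \in ps -> ABpath E A b p /\ excludes F p) /\
      (forall i j, i < size ps -> j < size ps -> i <> j ->
         forall v, v \in nth [::] ps i -> v \in nth [::] ps j -> v = b).

(* Main.v *)
Require Import Defs.
From mathcomp Require Import all_boot.
Set Implicit Arguments. Unset Strict Implicit. Unset Printing Implicit Defensive.
From Stdlib Require Import Classical.

Section Walks.
Variable V : finType.
Implicit Types (e : rel V) (A B S T : {set V}) (p q : seq V).

Definition wk e (a c : V) p :=
  if p is z :: q then [&& z == a, path e z q & last z q == c] else false.
Definition walk e A B p := exists a c, [/\ a \in A, c \in B & wk e a c p].
Definition sep e A B S := forall p, walk e A B p -> has (mem S) p.
Definition dj p q := ~~ has (mem q) p.
Definition fam e A B k ps :=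
  [/\ size ps = k, forall p, p \in ps -> walk e A B p & pairwise dj ps].
Definition revr e : rel V := fun u v => e v u.

Lemma djP p q : reflect (forall v, v \in p -> v \in q -> False) (dj p q).
Proof.
rewrite /dj; apply: (iffP hasPn) => H v H1.
  by move=> H2; move: (H v H1); rewrite /= H2.
by apply/negP => H2; apply: (H v).
Qed.

Lemma djC p q : dj p q = dj q p.
Proof.
by apply/djP/djP => H v H1 H2; apply: (H v).
Qed.

Lemma wk_head e a c z q : wk e a c (z :: q) -> a = z.
Proof. by case/and3P => /eqP. Qed.

Lemma wk_rcons_last e a c p w : wk e a c (rcons p w) -> c = w.
Proof.
case: p => [|z q] /=; first by case/andP => _ /eqP.
by case/and3P => _ _; rewrite last_rcons => /eqP.
Qed.

Lemma wk_single e a : wk e a a [:: a].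
Proof. by rewrite /= !eqxx. Qed.

Lemma wk_rcons e a c p d : wk e a c p -> e c d -> wk e a d (rcons p d).
Proof.
case: p => [|z q] //= /and3P [-> Hp /eqP <-] Hd.
by rewrite rcons_path Hp Hd last_rcons eqxx.
Qed.

Lemma wk_cat e a c p1 w p2 :
  wk e a c (p1 ++ w :: p2) <-> wk e a w (rcons p1 w) /\ wk e w c (w :: p2).
Proof.
case: p1 => [|z q] /=.
  rewrite eqxx andbT; split.
    by move/and3P => [H1 H2 H3]; rewrite H1 H2 H3.
  by case=> H1 /and3P [_ H2 H3]; rewrite H1 H2 H3.
rewrite cat_path /= rcons_path last_rcons last_cat /= eqxx.
split.
  move/and3P => [H1 /andP [H2 /andP [H3 H4]] H5].
  by rewrite H1 H2 H3 H4 H5.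
case=> /and3P [H1 /andP [H2 H3] /eqP H4] /and3P [_ H5 H6].
by rewrite H1 H2 H3 H5 -H4 H6.
Qed.

Lemma wk_cat2 e a w c p1 p2 :
  wk e a w (rcons p1 w) -> wk e w c (w :: p2) -> wk e a c (p1 ++ w :: p2).
Proof. by move=> H1 H2; apply/wk_cat. Qed.

Lemma wk_sub e e2 a c p : (forall u v, e u v -> e2 u v) -> wk e a c p -> wk e2 a c p.
Proof.
move=> Hs; case: p => [|z q] //= /and3P [-> Hp ->]; rewrite andbT /=.
by apply: sub_path Hp.
Qed.

Lemma wk_rev e a c p : wk e a c p -> wk (revr e) c a (rev p).
Proof.
elim: p a => [|z q IH] a //=.
case: q IH => [|z' q'] IH.
  by case/and3P => /eqP -> _ /eqP <-; rewrite /= !eqxx.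
move=> /and3P [/eqP Hz /andP [Hzz Hp] Hl].
have H1 : wk e z' c (z' :: q') by apply/and3P.
rewrite rev_cons -Hz; apply: wk_rcons (IH _ H1) _.
by rewrite /revr.
Qed.

Lemma walk_rev e A B p : walk e A B p -> walk (revr e) B A (rev p).
Proof. by case=> a [c [Ha Hc Hw]]; exists c, a; split=> //; apply: wk_rev. Qed.

Lemma sep_rev e A B S : sep e A B S -> sep (revr e) B A S.
Proof.
move=> Hs p /walk_rev Hw; rewrite -has_rev; apply: Hs.
by exact: Hw.
Qed.

Lemma walk_sub e e2 A B p : (forall u v, e u v -> e2 u v) -> walk e A B p -> walk e2 A B p.
Proof. by move=> Hs [a [c [Ha Hc Hw]]]; exists a, c; split=> //; apply: wk_sub Hw. Qed.

Lemma walk_nil e A B : ~ walk e A B [::].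
Proof. by case=> a [c []]. Qed.

Lemma first_hit (P : pred V) s : has P s ->
  exists s1 w s2, [/\ s = s1 ++ w :: s2, P w & ~~ has P s1].
Proof.
move=> H; case: (split_find H) => w s1 s2 Hw Hn.
by exists s1, w, s2; rewrite cat_rcons.
Qed.

End Walks.
Arguments dj {V}. Arguments wk {V}. Arguments walk {V}. Arguments sep {V}. Arguments fam {V}. Arguments revr {V}.


Section Remove.
Variable V : finType.
Implicit Types (A B S T : {set V}) (p q : seq V).
Variables (e e' : rel V) (x y : V).
Hypothesis He' : forall u v, e' u v = e u v && ((u != x) || (v != y)).

Lemma path_rm z q : path e z q -> x \notin belast z q -> path e' z q.
Proof.
elim: q z => [|w q IH] z //= /andP [Hzw Hp].
rewrite inE negb_or => /andP [Hzx Hb].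
by rewrite He' Hzw eq_sym Hzx /= IH.
Qed.

Lemma path_rm2 z q : path e z q -> y \notin q -> path e' z q.
Proof.
elim: q z => [|w q IH] z //= /andP [Hzw Hp].
rewrite inE negb_or => /andP [Hwy Hq].
by rewrite He' Hzw [w == y]eq_sym Hwy orbT /= IH.
Qed.

Lemma wk_rm_all a c p : wk e a c p -> x \notin p -> wk e' a c p.
Proof.
case: p => [|z q] //= /and3P [H1 H2 H3] Hx.
rewrite H1 H3 andbT /=; apply: path_rm H2 _.
by apply/negP => /mem_belast; apply/negP.
Qed.

Lemma wk_rm_all2 a c p : wk e a c p -> y \notin p -> wk e' a c p.
Proof.
case: p => [|z q] //= /and3P [H1 H2 H3] Hy.
rewrite H1 H3 andbT /=; apply: path_rm2 H2 _.
by apply/negP => Hq; move: Hy; rewrite inE Hq orbT.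
Qed.

Lemma wk_rm_pre a c s w : wk e a c (rcons s w) -> x \notin s -> wk e' a c (rcons s w).
Proof.
case: s => [|z q] //= /and3P [H1 H2 H3] Hx.
rewrite H1 H3 andbT /=; apply: path_rm H2 _.
by rewrite belast_rcons.
Qed.

Lemma sep_x A B S : sep e' A B S -> sep e A B (x |: S).
Proof.
move=> Hs p Hw; case Hxp: (x \in p).
  by apply/hasP; exists x => //; rewrite !inE eqxx.
case: Hw => a [c [Ha Hc Hw]].
have Hw' : walk e' A B p by exists a, c; split=> //; apply: wk_rm_all; rewrite ?Hxp.
apply: sub_has (Hs p Hw') => v /=; by by rewrite !inE => ->; rewrite orbT.
Qed.

Lemma sep_y A B S : sep e' A B S -> sep e A B (y |: S).
Proof.
move=> Hs p Hw; case Hyp: (y \in p).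
  by apply/hasP; exists y => //; rewrite !inE eqxx.
case: Hw => a [c [Ha Hc Hw]].
have Hw' : walk e' A B p by exists a, c; split=> //; apply: wk_rm_all2; rewrite ?Hyp.
apply: sub_has (Hs p Hw') => v /=; by rewrite !inE => ->; rewrite orbT.
Qed.

Lemma prefix_sep A B S T : sep e' A B S -> sep e' A (x |: S) T -> sep e A B T.
Proof.
move=> Hs HT p Hw.
have Hh := sep_x Hs Hw.
case: (first_hit Hh) => s1 [w [s2 [Hp Hwx Hn]]].
case: Hw => a [c [Ha Hc Hw]].
move: Hw; rewrite Hp => /wk_cat [Hw1 Hw2].
have Hx1 : x \notin s1.
  by apply/negP => Hx; move/hasP: Hn; apply; exists x => //; rewrite /= !inE eqxx.
have : walk e' A (x |: S) (rcons s1 w).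
  by exists a, w; split=> //; apply: wk_rm_pre.
move/HT; rewrite -cats1 has_cat /= orbF => H.
by rewrite has_cat /= orbA H.
Qed.

End Remove.

Lemma prefix_sep_rev (V : finType) (e e' : rel V) (x y : V)
  (He' : forall u v, e' u v = e u v && ((u != x) || (v != y)))
  (A B S T : {set V}) : sep e' A B S -> sep e' (y |: S) B T -> sep e A B T.
Proof.
move=> Hs HT.
have He'r : forall u v, revr e' u v = revr e u v && ((u != y) || (v != x)).
  by move=> u v; rewrite /revr He' orbC.
have := prefix_sep He'r (sep_rev Hs) (sep_rev HT).
move/sep_rev; exact.
Qed.

Section Trunc.
Variable V : finType.
Implicit Types (e : rel V) (A B S T X : {set V}) (p q : seq V).

Definition endonly X p := forall p1 w p2, p = p1 ++ w :: p2 -> w \in X -> p2 = [::].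
Definition startonly X p := forall p1 w p2, p = p1 ++ w :: p2 -> w \in X -> p1 = [::].

Lemma wk_last_mem e a c p : wk e a c p -> c \in p.
Proof. by case: p => [|z q] //= /and3P [_ _ /eqP <-]; apply: mem_last. Qed.

Lemma wk_head_mem e a c p : wk e a c p -> a \in p.
Proof. by case: p => [|z q] //= /and3P [/eqP -> _ _]; rewrite inE eqxx. Qed.

Lemma trunc1 e A X p : walk e A X p ->
  exists p', [/\ walk e A X p', all (mem p) p' & endonly X p'].
Proof.
case=> a [c [Ha Hc Hw]].
have Hh : has (mem X) p by apply/hasP; exists c => //; apply: wk_last_mem Hw.
case: (first_hit Hh) => s1 [w [s2 [Hp Hwx Hn]]].
move: Hw; rewrite Hp => /wk_cat [Hw1 Hw2].
exists (rcons s1 w); split.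
- by exists a, w.
- apply/allP => v; rewrite mem_rcons inE => Hv; change (v \in s1 ++ w :: s2).
  by rewrite mem_cat inE; case/orP: Hv => ->; rewrite ?orbT.
- move=> p1 w' p2 Hq Hw'; case/lastP: p2 Hq => [//|b l].
  rewrite -rcons_cons -rcons_cat => /rcons_inj [Hs _].
  move/hasP: Hn; case; exists w' => //; rewrite Hs mem_cat inE eqxx.
  by rewrite orbT.
Qed.

Lemma pairwise_sub ps' ps : all2 (fun p' p => all (mem p) p') ps' ps ->
  pairwise dj ps -> pairwise dj ps'.
Proof.
elim: ps' ps => [|p' ps' IH] [|p ps] //= /andP [Hs Ha] /andP [Hd Hp].
rewrite (IH _ Ha Hp) andbT.
elim: ps' ps Ha Hd {IH Hp} => [|q' qs IH2] [|q qs0] //= /andP [Hq Ha] /andP [Hd1 Hd2].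
rewrite (IH2 _ Ha Hd2) andbT.
apply/djP => v H1 H2; apply: (djP _ _ Hd1 v); [exact: (allP Hs) | exact: (allP Hq)].
Qed.

Lemma trunc_fam e A X k ps : fam e A X k ps ->
  exists ps', fam e A X k ps' /\ forall p, p \in ps' -> endonly X p.
Proof.
case=> Hsz Hw Hd.
have : exists ps', [/\ size ps' = size ps,
   forall p, p \in ps' -> walk e A X p /\ endonly X p &
   all2 (fun p' p => all (mem p) p') ps' ps].
  elim: ps Hw {Hsz Hd} => [|p ps IH] Hw; first by exists [::].
  case: (IH (fun q Hq => Hw q ltac:(by rewrite inE Hq orbT))) => ps' [H1 H2 H3].
  case: (trunc1 (Hw p (mem_head _ _))) => p' [H4 H5 H6].
  exists (p' :: ps'); split => /=; [by rewrite H1 | | by rewrite H5 H3].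
  by move=> q; rewrite inE => /orP [/eqP ->|/H2].
case=> ps' [H1 H2 H3]; exists ps'; split; last by move=> p /H2 [].
split; [by rewrite H1 | by move=> p /H2 [] | exact: pairwise_sub H3 Hd].
Qed.

Lemma dj_rev p q : dj (rev p) (rev q) = dj p q.
Proof. by rewrite /dj has_rev; congr (~~ _); apply: eq_has => v; rewrite /= mem_rev. Qed.

Lemma fam_rev e A B k ps : fam e A B k ps -> fam (revr e) B A k (map rev ps).
Proof.
case=> Hsz Hw Hd; split.
- by rewrite size_map.
- by move=> q /mapP [p Hp ->]; apply: walk_rev; apply: Hw.
- rewrite pairwise_map; apply: sub_pairwise Hd => p q /=; by rewrite dj_rev.
Qed.

Lemma trunc_fam_rev e Y B k qs : fam e Y B k qs ->
  exists qs', fam e Y B k qs' /\ forall q, q \in qs' -> startonly Y q.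
Proof.
move/fam_rev/trunc_fam => [ps' [Hf He]].
exists (map rev ps'); split; first exact: (fam_rev Hf).
move=> q /mapP [p Hp ->] p1 w p2 Hq Hwy.
have : p = rev p2 ++ w :: rev p1.
  by rewrite -[p]revK Hq rev_cat rev_cons cat_rcons.
move/(He p Hp)/(_ Hwy) => H; by rewrite -[p1]revK H.
Qed.

End Trunc.

Lemma in_split (T : eqType) (v : T) s : v \in s -> exists s1 s2, s = s1 ++ v :: s2.
Proof. by case/splitPr => s1 s2; exists s1, s2. Qed.

Lemma pairwise_mem (T : eqType) (r : rel T) s a b :
  pairwise r s -> a \in s -> b \in s -> a != b -> r a b || r b a.
Proof.
elim: s => [|z s IH] //=; rewrite !inE => /andP [Hz Hp].
case/orP => [/eqP ->|Ha]; case/orP => [/eqP ->|Hb]; rewrite ?eqxx //.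
- by move=> _; rewrite (allP Hz).
- by move=> _; rewrite (allP Hz) ?orbT.
- exact: IH.
Qed.

Lemma pairwise_map_in (T T' : Type) (r : rel T) (r' : rel T') (f : T -> T') s :
  pairwise r s -> (forall a b, r a b -> r' (f a) (f b)) -> pairwise r' (map f s).
Proof.
move=> Hp Hf; rewrite pairwise_map; apply: sub_pairwise Hp => a b /=; exact: Hf.
Qed.

Section Comb.
Variable V : finType.
Implicit Types (p q P Q : seq V).
Variables (e e' : rel V) (x y : V).
Hypothesis He' : forall u v, e' u v = e u v && ((u != x) || (v != y)).
Variables (A B S : {set V}) (k : nat).
Hypotheses (HxS : x \notin S) (HyS : y \notin S) (Hxy : e x y).
Hypothesis HcardY : #|y |: S| = k.
Hypothesis Hsep : sep e' A B S.
Variables (Ps Qs : seq (seq V)).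
Hypotheses (HPs : fam e' A (x |: S) k Ps) (HQs : fam e' (y |: S) B k Qs).
Hypotheses (HPe : forall P, P \in Ps -> endonly (x |: S) P)
           (HQs' : forall Q, Q \in Qs -> startonly (y |: S) Q).

Lemma e'e u v : e' u v -> e u v.
Proof. by rewrite He' => /andP []. Qed.

Definition endp P := if P is z :: q then last z q else x.

Lemma wk_endp a c P : wk e' a c P -> endp P = c.
Proof. by case: P => [|z q] //= /and3P [_ _ /eqP]. Qed.

Lemma wk_startp a c P : wk e' a c P -> head x P = a.
Proof. by case: P => [|z q] //= /and3P [/eqP]. Qed.

Lemma cross P Q a s t c v : wk e' a s P -> a \in A -> endonly (x |: S) P ->
  wk e' t c Q -> c \in B -> startonly (y |: S) Q -> v \in P -> v \in Q ->
  [/\ v \in S, v = s & v = t].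
Proof.
move=> HP Ha HPo HQ Hc HQo /in_split [P1 [P2 EP]] /in_split [Q1 [Q2 EQ]].
move: HP HQ; rewrite EP EQ => /wk_cat [HP1 HP2] /wk_cat [HQ1 HQ2].
have Hw : walk e' A B (P1 ++ v :: Q2) by exists a, c; split=> //; apply: wk_cat2 HP1 HQ2.
have := Hsep Hw; rewrite has_cat /= => /orP [/hasP [w Hw1 Hw2]|/orP [HvS|/hasP [w Hw1 Hw2]]].
- case/in_split: Hw1 => [P1a [P1b EP1]].
  have := HPo P1a w (P1b ++ v :: P2); rewrite EP EP1 -catA /= => /(_ erefl).
  have Hw2' : w \in S by exact: Hw2.
  by rewrite !inE Hw2' orbT => /(_ isT); case: (P1b).
- split=> //.
    have := HPo P1 v P2; rewrite EP => /(_ erefl); rewrite !inE HvS orbT => /(_ isT) HP2e.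
    by move: HP2; rewrite HP2e /= => /andP [_ /eqP].
  have := HQo Q1 v Q2; rewrite EQ => /(_ erefl); rewrite !inE HvS orbT => /(_ isT) HQ1e.
  by move: HQ1; rewrite HQ1e /= => /andP [/eqP].
- case/in_split: Hw1 => [Q2a [Q2b EQ2]].
  have := HQo (Q1 ++ v :: Q2a) w Q2b; rewrite EQ EQ2 -catA /= => /(_ erefl).
  have Hw2' : w \in S by exact: Hw2.
  by rewrite !inE Hw2' orbT => /(_ isT); case: (Q1).
Qed.

Definition g s := if s == x then y else s.

Lemma g_in s : s \in x |: S -> g s \in y |: S.
Proof.
rewrite /g !inE; case: eqP => [_ _|_ /= Hs]; first by rewrite eqxx.
by rewrite Hs orbT.
Qed.

Lemma g_inj s s' : s \in x |: S -> s' \in x |: S -> g s = g s' -> s = s'.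
Proof.
rewrite /g !inE.
case: (s =P x) => [->|Hsx]; case: (s' =P x) => [->|Hs'x] //= Hs Hs'.
- by move=> Hy; move: Hs'; rewrite -Hy (negbTE HyS).
- by move=> Hy; move: Hs; rewrite Hy (negbTE HyS).
Qed.

Lemma Q_walk Q : Q \in Qs -> exists t c, [/\ t \in y |: S, c \in B & wk e' t c Q].
Proof. by case: HQs => _ Hw _ /Hw. Qed.

Lemma P_walk P : P \in Ps -> exists a s, [/\ a \in A, s \in x |: S & wk e' a s P].
Proof. by case: HPs => _ Hw _ /Hw. Qed.

Lemma Qs_uniq : uniq (map (head x) Qs).
Proof.
case: HQs => _ Hw Hd.
have Hh : forall Q, Q \in Qs -> head x Q \in Q.
  move=> Q /Q_walk [t [c [_ _ HQ]]]; rewrite (wk_startp HQ); exact: wk_head_mem HQ.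
elim: Qs Hd Hh {Hw} => [|Q qs IH] //= /andP [Ha Hp] Hh.
rewrite IH //; last by move=> Q' HQ'; apply: Hh; rewrite inE HQ' orbT.
rewrite andbT; apply/mapP => -[Q' HQ' Heq].
have := allP Ha Q' HQ'; move/djP/(_ (head x Q) (Hh Q (mem_head _ _))); apply.
by rewrite Heq; apply: Hh; rewrite inE HQ' orbT.
Qed.

Lemma Qs_cover t : t \in y |: S -> has (fun Q => head x Q == t) Qs.
Proof.
move=> Ht.
have Hsub : {subset map (head x) Qs <= y |: S}.
  by move=> u /mapP [Q /Q_walk [t' [c [Ht' _ HQ]]] ->]; rewrite (wk_startp HQ).
have Hc : #|map (head x) Qs| = #|y |: S|.
  by rewrite (card_uniqP Qs_uniq) size_map HcardY; case: HQs.
have Hs : (mem (map (head x) Qs)) \subset (mem (y |: S)) by apply/subsetP.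
have := (subset_leqif_card Hs).2; rewrite Hc eqxx => /esym /subsetP /(_ t Ht).
by case/mapP => Q HQ ->; apply/hasP; exists Q => //=.
Qed.

Definition Qm P := nth [::] Qs (find (fun Q => head x Q == g (endp P)) Qs).

Lemma Qm_prop P : P \in Ps -> Qm P \in Qs /\ head x (Qm P) = g (endp P).
Proof.
case/P_walk => a [s [Ha Hs HP]].
have Hh := Qs_cover (g_in Hs); rewrite -(wk_endp HP) in Hh.
split; first by apply: mem_nth; rewrite -has_find.
by apply/eqP; apply: (nth_find [::] Hh).
Qed.

Definition comb P := P ++ (if endp P == x then Qm P else behead (Qm P)).

Lemma comb_mem P v : v \in comb P -> v \in P \/ v \in Qm P.
Proof.
rewrite /comb mem_cat => /orP [|]; first by left.
by case: ifP => _ H; right => //; apply: mem_behead.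
Qed.

Lemma comb_walk P : P \in Ps -> walk e A B (comb P).
Proof.
move=> HPin; have [HQin Hhd] := Qm_prop HPin.
case/P_walk: HPin => a [s [Ha Hs HP]].
case/Q_walk: HQin => t [c [Ht Hc HQ]].
exists a, c; split=> //.
rewrite /comb (wk_endp HP).
have HPe2 := wk_sub e'e HP; have HQe := wk_sub e'e HQ.
move: Hhd; rewrite (wk_endp HP) (wk_startp HQ) /g.
case: (Qm P) HQ HQe => [|hd Q'] // HQ HQe.
have Eh : hd = t by rewrite (wk_head HQ).
subst hd.
case: ifP => [/eqP Esx Ety|Hsx Ets] /=.
  subst s t; apply: wk_cat2 HQe; exact: wk_rcons HPe2 Hxy.
subst t.
move: HP HPe2; case: P => [|z q] HP HPe2; first by [].
have Hl : last z q = s by move: HP => /and3P [_ _ /eqP].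
rewrite lastI Hl cat_rcons; apply: wk_cat2 HQe.
by move: HPe2; rewrite lastI Hl.
Qed.

Lemma cross_PQ P P' v : P \in Ps -> P' \in Ps -> dj P P' -> v \in P -> v \in Qm P' -> False.
Proof.
move=> HP HP' Hd HvP HvQ.
have [HQin Hhd] := Qm_prop HP'.
have HPo := HPe HP.
case/P_walk: (HP) => a [s [Ha Hs HPw]].
case/P_walk: (HP') => a' [s' [Ha' Hs' HPw']].
case/Q_walk: (HQin) => t [c [Ht Hc HQw]].
have [HvS Evs Evt] := cross HPw Ha HPo HQw Hc (HQs' HQin) HvP HvQ.
move: Hhd; rewrite (wk_startp HQw) (wk_endp HPw') /g -Evt.
case: ifP => [_ Evy|_ Evs'].
  by move: HvS; rewrite Evy (negbTE HyS).
apply: (djP _ _ Hd v HvP); rewrite Evs'; exact: wk_last_mem HPw'.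
Qed.

Lemma comb_dj P P' : P \in Ps -> P' \in Ps -> dj P P' -> dj (comb P) (comb P').
Proof.
move=> HP HP' Hd; apply/djP => v /comb_mem [H1|H1] /comb_mem [H2|H2].
- exact: (djP _ _ Hd v H1 H2).
- exact: (cross_PQ HP HP' Hd H1 H2).
- by apply: (cross_PQ HP' HP _ H2 H1); rewrite djC.
have [HQ Hh] := Qm_prop HP; have [HQ' Hh'] := Qm_prop HP'.
case/P_walk: (HP) => a [s [Ha Hs HPw]].
case/P_walk: (HP') => a' [s' [Ha' Hs' HPw']].
case: (Qm P =P Qm P') => [Eq|Neq].
  move: Hh; rewrite Eq Hh' (wk_endp HPw) (wk_endp HPw') => /esym /(g_inj Hs Hs') Es.
  apply: (djP _ _ Hd s (wk_last_mem HPw)); rewrite Es; exact: (wk_last_mem HPw').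
case: HQs => _ _ Hpw.
have := pairwise_mem Hpw HQ HQ' (introN eqP Neq).
by case/orP => /djP Hdd; [apply: (Hdd v) | apply: (Hdd v)].
Qed.

Lemma comb_fam : fam e A B k (map comb Ps).
Proof.
case: HPs => Hsz _ Hd; split.
- by rewrite size_map.
- by move=> R /mapP [P HP ->]; apply: comb_walk.
rewrite pairwise_map; apply: (sub_in_pairwise (P := mem Ps)) _ _ (allss _) Hd.
by move=> P P' HP HP' /=; apply: comb_dj.
Qed.

End Comb.

Section Menger.
Variable V : finType.

Definition edges (e : rel V) := [set u : V * V | e u.1 u.2].

Lemma menger_base (e : rel V) A B k : (forall u v, ~~ e u v) ->
  (forall S, sep e A B S -> k <= #|S|) -> exists ps, fam e A B k ps.
Proof.
move=> He Hk.
have Hs : sep e A B (A :&: B).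
  move=> [|z q] [a [c [Ha Hc Hw]]] //.
  case: q Hw => [|z' q] /=.
    case/andP => /eqP Eza /eqP Ezc; apply/orP; left; rewrite inE.
    by rewrite Eza Ha /= -Eza Ezc.
  by case/and3P => _ /andP [Hzz _]; move: (He z z'); rewrite Hzz.
have HkAB := Hk _ Hs.
exists (map (fun v => [:: v]) (take k (enum (A :&: B)))); split.
- by rewrite size_map size_takel // -cardE.
- move=> p /mapP [v Hv ->]; move: Hv => /mem_take; rewrite mem_enum inE => /andP [Ha Hb].
  by exists v, v; split=> //; apply: wk_single.
- rewrite pairwise_map.
  have : uniq (take k (enum (A :&: B))) by apply: take_uniq; apply: enum_uniq.
  rewrite uniq_pairwise; apply: sub_pairwise => u v /= Huv.
  by rewrite /dj /= inE orbF.
Qed.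

Lemma menger n : forall k (e : rel V) A B, #|edges e| <= n ->
  (forall S, sep e A B S -> k <= #|S|) -> exists ps, fam e A B k ps.
Proof.
elim: n => [|n IH] k e A B Hn Hk.
  apply: menger_base Hk => u v; apply/negP => Huv.
  have : (u, v) \in edges e by rewrite inE.
  by move: Hn; rewrite leqn0 cards_eq0 => /eqP ->; rewrite inE.
case: (set_0Vmem (edges e)) => [E0|[[x y] Hxy]].
  apply: menger_base Hk => u v; apply/negP => Huv.
  have : (u, v) \in edges e by rewrite inE.
  by rewrite E0 inE.
have Hxy' : e x y by move: Hxy; rewrite inE.
pose e' := fun u v => e u v && ((u != x) || (v != y)).
have He' : forall u v, e' u v = e u v && ((u != x) || (v != y)) by [].
have e'e : forall u v, e' u v -> e u v by move=> u v /andP [].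
have Hn' : #|edges e'| <= n.
  have Hsub : edges e' \subset edges e :\ (x, y).
    apply/subsetP => [[u v]]; rewrite !inE /= => /andP [Huv Hne].
    rewrite Huv andbT; apply/negP => /eqP [Eu Ev]; move: Hne; by rewrite Eu Ev !eqxx.
  have := subset_leq_card Hsub; move: Hn; rewrite (cardsD1 (x, y) (edges e)) Hxy.
  rewrite add1n ltnS => H1 H2; exact: leq_trans H2 H1.
case: (classic (forall S, sep e' A B S -> k <= #|S|)) => [Hk'|Hnk].
  case: (IH k e' A B Hn' Hk') => ps [H1 H2 H3]; exists ps; split=> //.
  by move=> p /H2; apply: walk_sub.
case: (not_all_ex_not _ _ Hnk) => S HS.
have [Hs HSk] : sep e' A B S /\ #|S| < k.
  split; first by apply: NNPP => H; apply: HS => /H.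
  by rewrite ltnNge; apply/negP => H; apply: HS.
have HkX := Hk _ (sep_x He' Hs); have HkY := Hk _ (sep_y He' Hs).
have HxS : x \notin S.
  by apply/negP => Hx; move: HkX; rewrite cardsU1 Hx add0n leqNgt HSk.
have HyS : y \notin S.
  by apply/negP => Hy; move: HkY; rewrite cardsU1 Hy add0n leqNgt HSk.
have HcY : #|y |: S| = k.
  by apply/eqP; rewrite eqn_leq HkY cardsU1 HyS add1n HSk.
have [Ps [HPs HPe]] : exists Ps, fam e' A (x |: S) k Ps /\
    forall P, P \in Ps -> endonly (x |: S) P.
  have [Ps0 H0] := IH k e' A (x |: S) Hn' (fun T HT => Hk T (prefix_sep He' Hs HT)).
  exact: trunc_fam H0.
have [Qs [HQs HQe]] : exists Qs, fam e' (y |: S) B k Qs /\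
    forall Q, Q \in Qs -> startonly (y |: S) Q.
  have [Qs0 H0] := IH k e' (y |: S) B Hn' (fun T HT => Hk T (prefix_sep_rev He' Hs HT)).
  exact: trunc_fam_rev H0.
eexists; exact: (comb_fam He' HyS Hxy' HcY Hs HPs HQs HPe HQe).
Qed.

Theorem menger_thm k (e : rel V) A B :
  (forall S, sep e A B S -> k <= #|S|) -> exists ps, fam e A B k ps.
Proof. exact: (menger (leqnn _)). Qed.

End Menger.

Lemma reaches_mono (V : finType) (E : rel V) f (X X' Y : {set V}) :
  X \subset X' -> reaches E f X Y -> reaches E f X' Y.
Proof.
move=> Hs; rewrite /reaches => H; apply: leq_trans H _; apply: subset_leq_card.
apply/subsetP => v; rewrite !inE => /andP [Hv ->]; by rewrite (subsetP Hs).
Qed.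

Lemma disjP (V : finType) (X Y : {set V}) :
  reflect (forall x, x \in X -> x \in Y -> False) [disjoint X & Y].
Proof.
apply: (iffP idP) => H.
  by move=> x Hx Hy; rewrite (disjointFr H Hx) in Hy.
rewrite disjoint_subset; apply/subsetP => x Hx; rewrite inE; apply/negP => Hy.
exact: H x Hx Hy.
Qed.

Section Final.
Variables (V : finType) (E : rel V) (f : nat) (A B F : {set V}) (b : V).
Hypothesis Hpart : partition3 A B F.
Hypothesis Hb : b \in B.

Definition e0 : rel V := fun u v => [&& E u v, u \notin F, v \notin F, u != b & v != b].
Definition N := [set u | E u b && (u \notin F)].

Lemma bA : b \notin A.
Proof. case: Hpart => H _ _ _; apply/negP => Hba; by move/disjP: H => /(_ b Hba); apply. Qed.
Lemma bF : b \notin F.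
Proof. case: Hpart => _ _ H _; apply/negP => HbF; by move/disjP: H => /(_ b Hb); apply. Qed.
Lemma AF v : v \in A -> v \notin F.
Proof. case: Hpart => _ H _ _ Hv; apply/negP => HvF; by move/disjP: H => /(_ v Hv); apply. Qed.

Lemma e0_all z q : path e0 z q -> all (fun v => (v != b) && (v \notin F)) q.
Proof.
elim: q z => [|w q IH] z //= /andP [/and5P [_ _ H1 _ H2] Hp].
by rewrite H1 H2 (IH _ Hp).
Qed.

Definition tr (p : seq V) := if p is z :: q then z :: rcons (shorten z q) b else [::].

Lemma tr_ok p : walk e0 A N p ->
  [/\ ABpath E A b (tr p), excludes F (tr p) & forall v, v \in tr p -> v = b \/ v \in p].
Proof.
case=> a [c [Ha Hc]]; case: p => [|z q] //= /and3P [/eqP Eza Hp /eqP Hl].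
subst z; move: Hc; rewrite -Hl.
have Hall := e0_all Hp.
case: (shortenP Hp) => q' Hp' Hu Hsub.
rewrite inE => /andP [HE HnF].
split.
- split; first exact: bA.
  exists a, (rcons q' b); split=> //; rewrite rcons_path HE andbT.
  split; last split; last split=> //; last by rewrite last_rcons.
  + by apply: sub_path Hp' => u v /and5P [].
  + rewrite -rcons_cons rcons_uniq Hu andbT inE negb_or; apply/andP; split.
      by apply/negP => /eqP Eb; move: bA; rewrite Eb Ha.
    apply/negP => /Hsub Hbq; by move: (allP Hall b Hbq); rewrite eqxx.
- rewrite /excludes /= AF //= all_rcons bF /=; apply/allP => v /Hsub Hv.
  by case/andP: (allP Hall v Hv).
- move=> v; rewrite inE mem_rcons inE => /orP [/eqP ->|/orP [/eqP ->|/Hsub Hv]].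
  + by right; rewrite inE eqxx.
  + by left.
  + by right; rewrite inE Hv orbT.
Qed.

Section Sep.
Variable S : {set V}.
Hypothesis Hsep : sep e0 A N S.

Definition e2 : rel V := fun u v => [&& E u v, u \notin F, u \notin S, v \notin F & u != b].
Definition R := [set v | connect e2 v b].

Definition good u := [&& u \notin F, u \notin S & u != b].

Lemma e2_good x s : path e2 x s -> all good (belast x s).
Proof.
elim: s x => [|y s IH] x //= /andP [/and5P [_ H1 H2 _ H3] Hp].
by rewrite /good H1 H2 H3 /= IH.
Qed.

Lemma e2_e0 x s : path e2 x s -> all good (x :: s) -> path e0 x s.
Proof.
elim: s x => [|y s IH] x //= /andP [/and5P [H0 H1 _ H2 H3] Hp] /andP [Hgx Hgs].
rewrite IH //; move: Hgs => /andP [/and3P [_ _ Hy3] _].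
by rewrite /e0 H0 H1 H2 H3 Hy3.
Qed.

Lemma R_b : b \in R.
Proof. by rewrite inE connect0. Qed.

Lemma RF v : v \in R -> v \notin F.
Proof.
rewrite inE => /connectP [[|w p] /=]; first by move=> _ <-; apply: bF.
by case/andP => /and5P [].
Qed.

Lemma RA a : a \in A -> a \notin R.
Proof.
move=> Ha; rewrite inE; apply/negP => /connectP [[|w p] Hp Hl].
  by move: bA; rewrite Hl Ha.
move: Hp Hl; rewrite lastI /= last_rcons => Hp Hl; move: Hp; rewrite -Hl => Hp.
have Hg := e2_good Hp; move: Hp; rewrite belast_rcons in Hg.
rewrite rcons_path => /andP [Hp /and5P [HE HF' _ _ _]].
have Hw : walk e0 A N (a :: belast w p).
  exists a, (last a (belast w p)); split=> //; first by rewrite inE HE HF'.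
  by apply/and3P; split=> //; apply: e2_e0 Hp Hg.
have := Hsep Hw; apply/negP; apply/hasPn => u Hu.
by case/and3P: (allP Hg u Hu).
Qed.

Lemma into_R i j : i \notin R -> i \notin F -> i != b -> j \in R -> E i j -> i \in S.
Proof.
move=> HiR HiF Hib HjR HE; case HiS: (i \in S) => //; exfalso; move/negP: HiR; apply.
move: (HjR); rewrite !inE => Hj; apply: connect_trans Hj; apply: connect1.
by rewrite /e2 HE HiF HiS (RF HjR) Hib.
Qed.

End Sep.

End Final.

Theorem lemma5 (V : finType) (E : rel V) (f : nat)
  (Hsimple : simple_digraph E) (Hcond : condition1 E f)
  (A B F : {set V}) (Hpart : partition3 A B F) (HA : A != set0)
  (HF : #|F| <= f) :
  ~ reaches E f B A -> robust_reach E f A B F.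
Proof.
move=> HBA; right => b Hb.
case: (classic (forall S, sep (e0 E F b) A (N E F b) S -> f.+1 <= #|S|)) => [Hk|Hnk].
  case: (menger_thm Hk) => ps [Hsz Hw Hd].
  exists (map (tr b) ps); split; first by rewrite size_map.
  split.
    by move=> p /mapP [p0 Hp0 ->]; case: (tr_ok Hpart Hb (Hw _ Hp0)).
  move=> i j; rewrite size_map => Hi Hj Hij v.
  rewrite !(nth_map [::]) //.
  case: (tr_ok Hpart Hb (Hw _ (mem_nth [::] Hi))) => _ _ Hm1.
  case: (tr_ok Hpart Hb (Hw _ (mem_nth [::] Hj))) => _ _ Hm2.
  move=> /Hm1 [->|H1] // /Hm2 [->|H2] //.
  exfalso.
  move/(pairwiseP [::]): Hd => Hd.
  case: (ltngtP i j) => Hc; last by apply: Hij.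
    by have := Hd i j Hi Hj Hc => /djP Hdd; apply: (Hdd v).
  by have := Hd j i Hj Hi Hc => /djP Hdd; apply: (Hdd v).
case: (not_all_ex_not _ _ Hnk) => S HS.
have [Hs HSf] : sep (e0 E F b) A (N E F b) S /\ #|S| <= f.
  split; first by apply: NNPP => H; apply: HS => /H.
  by rewrite leqNgt; apply/negP => H; apply: HS.
case: (Hpart) => HAB HAF HBF HU.
pose Rs := R E F b S.
pose C := ~: (A :|: Rs :|: F).
have HRA : forall v, v \in Rs -> v \notin A.
  by move=> v Hv; apply/negP => Hva; move: Hv; apply/negP; apply: (RA Hpart Hb Hs).
have HRF : forall v, v \in Rs -> v \notin F by move=> v; apply: (RF Hpart Hb).
have Hp4 : partition4 A C Rs F.
  have D1 : [disjoint A & C] by apply/disjP => v Ha; rewrite !inE Ha.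
  have D2 : [disjoint A & Rs] by apply/disjP => v Ha Hr; move: (HRA v Hr); rewrite Ha.
  have D4 : [disjoint C & Rs].
    by apply/disjP => v; rewrite !inE => /norP [/norP [_ /negbTE ->]].
  have D5 : [disjoint C & F] by apply/disjP => v; rewrite !inE => /norP [_ /negbTE ->].
  have D6 : [disjoint Rs & F] by apply/disjP => v Hr; move: (HRF v Hr) => /negbTE ->.
  have D7 : A :|: C :|: Rs :|: F == [set: V].
    apply/eqP/setP => v; rewrite in_setT !in_setU in_setC !in_setU.
    by case: (v \in A); case: (v \in Rs); case: (v \in F).
  by rewrite /partition4 D1 D2 HAF D4 D5 D6 D7.
have HRn : Rs != set0 by apply/set0Pn; exists b; apply: R_b.
case: (Hcond _ _ _ _ Hp4 HA HRn HF) => Hr.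
  suff Hle : #|[set i in A :|: C | [exists j in Rs, E i j]]| <= f.
    by move: Hr; rewrite /reaches => /leq_trans /(_ Hle); rewrite ltnn.
  apply: leq_trans HSf; apply: subset_leq_card; apply/subsetP => i.
  rewrite in_set => /andP [Hi /existsP [j /andP [Hj HE]]].
  have HiR : i \notin Rs.
    move: Hi; rewrite in_setU => /orP [Ha|]; last by rewrite in_setC !in_setU => /norP [/norP [_ ->]].
    by apply/negP => /HRA; rewrite Ha.
  have HiF : i \notin F.
    move: Hi; rewrite in_setU => /orP [Ha|]; first exact: (AF Hpart Ha).
    by rewrite in_setC !in_setU => /norP [_ ->].
  have Hib : i != b by apply/eqP => Eib; move: HiR; rewrite Eib R_b.
  exact: (into_R Hpart Hb HiR HiF Hib Hj HE).
exfalso; apply: HBA; apply: reaches_mono Hr; apply/subsetP => v Hv.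
have [HvA HvF] : v \notin A /\ v \notin F.
  move: Hv; rewrite in_setU => /orP [Hr'|]; first by split; [apply: HRA | apply: HRF].
  by rewrite in_setC !in_setU => /norP [/norP [-> _] ->].
have : v \in [set: V] by rewrite in_setT.
by rewrite -HU !in_setU (negbTE HvA) (negbTE HvF) orbF.
Qed.
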